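(* Let $G$ be a finite, simple, undirected, connected graph whose vertex set $V(G)$ is a set of integers. Then there exists an elimination tree $T$ of $G$ whose depth equals the treedepth of $G$ and which has the following property: for every vertex $w \in V(G)$ and every vertex $v \in V(G)$ that dominates $w$ in $G$, the vertex $w$ is not an ancestor of $v$ in $T$.
   Context: For a vertex $x$ of $G$, $N(x)$ denotes the set of neighbours of $x$ in $G$. A treedepth decomposition of $G$ is a rooted forest $F$ on vertex set $V(G)$ such that for every edge $\{u,v\}$ of $G$, either $u$ is an ancestor of $v$ or $v$ is an ancestor of $u$ in $F$. The depth of a rooted forest is the maximum number of vertices on a root-to-leaf path. The treedepth of $G$ is the minimum depth of a treedepth decomposition of $G$. An elimination tree of a connected graph $G$ is defined recursively: if $G$ has a single vertex, its elimination tree is $G$ itself (a single root); otherwise, choose a vertex $v$ of $G$, let $F$ be a forest consisting of one elimination tree for each connected component of $G - v$, and form a rooted tree by making $v$ the parent of every root of $F$. Given distinct vertices $v, w \in V(G)$ (adjacent or not), $v$ dominates $w$ in $G$ if either (1) $N(v) \setminus \{w\}$ is a proper superset of $N(w) \setminus \{v\}$, or (2) $N(v) \setminus \{w\} = N(w) \setminus \{v\}$ and $v > w$ (comparison as integers). *)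

(* Defs.v *)
From mathcomp Require Import all_boot all_order all_algebra finmap.
Set Implicit Arguments.
Unset Strict Implicit.
Unset Printing Implicit Defensive.

Section Graphs.
Variable T : finType.
(* A simple graph on vertex type T: [e] is assumed symmetric and irreflexive
   in the theorem statement. *)
Variable e : rel T.

Definition nbhd (x : T) : {set T} := [set y | e x y].

Definition induced (S : {set T}) : rel T :=
  [rel x y | [&& x \in S, y \in S & e x y]].

Definition connected_in (S : {set T}) : Prop :=
  forall x y, x \in S -> y \in S -> connect (induced S) x y.

Definition component (S C : {set T}) : Prop :=
  exists2 x, x \in S & C = [set y | (y \in S) && connect (induced S) x y].

(* Rooted forests on T are represented by a parent function. *)
Definition up (par : T -> option T) (k : nat) (x : T) : option T :=
  iter k (fun o => obind par o) (Some x).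

Definition ancestor (par : T -> option T) (u v : T) : Prop :=
  exists2 k, 0 < k & up par k v = Some u.

Definition rooted_forest (par : T -> option T) : Prop :=
  forall x, exists k, up par k x = None.

Definition root_path (par : T -> option T) (x : T) : {set T} :=
  [set u | [exists k : 'I_#|T|.+1, up par k x == Some u]].

Definition forest_depth (par : T -> option T) : nat :=
  \max_(x : T) #|root_path par x|.

Definition td_decomposition (par : T -> option T) : Prop :=
  rooted_forest par /\
  forall u v, e u v -> ancestor par u v \/ ancestor par v u.

Definition is_treedepth (d : nat) : Prop :=
  (exists2 par, td_decomposition par & forest_depth par = d) /\
  (forall par, td_decomposition par -> d <= forest_depth par).

(* elim_tree par S r : the restriction of the parent function par to S
   is an elimination tree of G[S] with root r (built recursively: r is
   chosen, and each component C of G[S] - r carries an elimination tree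
   whose root c has parent r). *)
Inductive elim_tree (par : T -> option T) : {set T} -> T -> Prop :=
| ElimTree (S : {set T}) (r : T) :
    r \in S ->
    (forall C, component (S :\ r) C ->
       exists2 c, c \in C & par c = Some r /\ elim_tree par C c) ->
    elim_tree par S r.

Definition dominates (lab : T -> int) (v w : T) : bool :=
  (v != w) &&
  (((nbhd w :\ v) \proper (nbhd v :\ w)) ||
   ((nbhd v :\ w == nbhd w :\ v) && (lab w < lab v)%R)).

End Graphs.

(* Main.v *)
Require Import Defs.
From mathcomp Require Import all_boot all_order all_algebra finmap.
From mathcomp Require Import perm zify.
From Stdlib Require Import Classical IndefiniteDescription.
Set Implicit Arguments. Unset Strict Implicit. Unset Printing Implicit Defensive.
Import Order.TTheory.

Section Forest.
Variable T : finType.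
Implicit Types (p : T -> option T) (x y u : T).

Lemma iter_none p i : iter i (fun o => obind p o) None = None.
Proof. by elim: i => //= i ->. Qed.

Lemma upD p i j x : up p (i + j) x = obind (up p i) (up p j x).
Proof.
rewrite /up iterD; case: (iter j _ _) => [?|] //=; exact: iter_none.
Qed.

Lemma upS p k x : up p k.+1 x = obind p (up p k x).
Proof. by []. Qed.

Lemma up_none p i j x : i <= j -> up p i x = None -> up p j x = None.
Proof.
move=> hij h; rewrite -(subnK hij) upD h //.
Qed.

Lemma no_cycle p x k : rooted_forest p -> 0 < k -> up p k x <> Some x.
Proof.
move=> rf k0 hk.
have hm : forall m, up p (m * k) x = Some x.
  elim=> [|m IH] //; by rewrite mulSn upD IH /= hk.
have [n hn] := rf x.
have : up p (n * k) x = None by apply: (up_none (i:=n)) => //; rewrite leq_pmulr.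
by rewrite hm.
Qed.

Lemma up_bound p x k u : rooted_forest p -> up p k x = Some u -> k < #|T|.
Proof.
move=> rf hk; rewrite ltnNge; apply/negP => hT.
pose g (i : 'I_k.+1) := odflt x (up p i x).
have hS : forall i : 'I_k.+1, up p i x = Some (g i).
  move=> i; rewrite /g; case E: (up p i x) => [a|] //.
  have := up_none (j:=k) (ltn_ord i : i <= k) E; by rewrite hk.
have ni : ~ injective g.
  by move/leq_card; rewrite card_ord; lia.
have [i hi] := not_all_ex_not _ _ ni.
have [j hj] := not_all_ex_not _ _ hi.
have [hg hne] := imply_to_and _ _ hj.
have cyc : forall (a b : 'I_k.+1), a < b -> g a = g b -> False.
  move=> a b ab hab.
  have := hS b; rewrite -(subnK (ltnW ab)) upD hS /= hab.
  apply: no_cycle => //; lia.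
case: (ltngtP i j) => h.
- exact: (cyc _ _ h hg).
- exact: (cyc _ _ h (esym hg)).
- by apply: hne; apply: val_inj.
Qed.

Definition ance p u x := u = x \/ ancestor p u x.

Lemma anc_trans p a b c : ancestor p a b -> ancestor p b c -> ancestor p a c.
Proof.
move=> [l l0 hl] [k k0 hk]; exists (l + k); first lia.
by rewrite upD hk /= hl.
Qed.

Lemma ance_trans p a b c : ance p a b -> ance p b c -> ance p a c.
Proof.
move=> [->|h1] [<-|h2]; [by left|by right|by right|right; exact: anc_trans h1 h2].
Qed.

Lemma anc_comp p a b x : ancestor p a x -> ancestor p b x ->
  a = b \/ ancestor p a b \/ ancestor p b a.
Proof.
move=> [i i0 hi] [j j0 hj].
case: (ltngtP i j) => h.
- right; right; exists (j - i); first lia.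
  by rewrite -(subnK (ltnW h)) upD hi in hj.
- right; left; exists (i - j); first lia.
  by rewrite -(subnK (ltnW h)) upD hj in hi.
- by left; move: hi; rewrite h hj => -[].
Qed.

Lemma anc_irr p x : rooted_forest p -> ~ ancestor p x x.
Proof. by move=> rf [k k0 hk]; exact: no_cycle rf k0 hk. Qed.

Lemma rp_ance p u x : rooted_forest p -> (u \in root_path p x) <-> ance p u x.
Proof.
move=> rf; rewrite inE; split.
- move=> /existsP [k /eqP hk].
  case: (posnP k) => [k0|k0]; first by left; move: hk; rewrite k0 => -[].
  by right; exists k.
- case=> [->|[k k0 hk]]; apply/existsP.
  + by exists ord0.
  + have hb : k < #|T|.+1 by have := up_bound rf hk; lia.
    by exists (Ordinal hb); rewrite hk.
Qed.

End Forest.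

Section Graph.
Variable T : finType.
Variable e : rel T.
Hypothesis esym : symmetric e.
Hypothesis eirr : irreflexive e.
Implicit Types (p : T -> option T) (x y u : T) (S C : {set T}).

Definition Cx S x := [set y | (y \in S) && connect (induced e S) x y].

Lemma induced_sym S : symmetric (induced e S).
Proof. by move=> x y; rewrite /induced /= esym andbCA. Qed.

Lemma iconn_sym S x y : connect (induced e S) x y = connect (induced e S) y x.
Proof. exact: (sym_connect_sym (induced_sym S)). Qed.

Lemma Cx_comp S x : x \in S -> component e S (Cx S x).
Proof. by move=> xS; exists x. Qed.

Lemma Cx_in S x : x \in S -> x \in Cx S x.
Proof. by move=> xS; rewrite inE xS connect0. Qed.

Lemma comp_sub S C : component e S C -> C \subset S.
Proof. by move=> [x _ ->]; apply/subsetP => y; rewrite inE => /andP[]. Qed.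

Lemma comp_eq S C x : component e S C -> x \in C -> C = Cx S x.
Proof.
move=> [x0 x0S ->]; rewrite inE => /andP[xS c0].
apply/setP => y; rewrite !inE; case: (y \in S) => //=.
apply/idP/idP => h.
- by apply: connect_trans h; rewrite iconn_sym.
- exact: connect_trans c0 h.
Qed.

Lemma comp_closed S C x y : component e S C -> x \in C -> y \in S -> e x y -> y \in C.
Proof.
move=> hC xC yS exy; have xS : x \in S by have := comp_sub hC; move/subsetP; apply.
rewrite (comp_eq hC xC) inE yS /=; apply: connect1; by rewrite /induced /= xS yS exy.
Qed.

Lemma lift_conn S C y z : component e S C -> y \in C ->
  connect (induced e S) y z -> connect (induced e C) y z.
Proof.
move=> hC yC /connectP [q hq ->]; elim: q y yC hq => [|a q IH] y yC /=.
  by rewrite connect0.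
move=> /andP[/and3P[yS aS eya] hq].
have aC : a \in C by exact: comp_closed hC yC aS eya.
apply: connect_trans (IH a aC hq); apply: connect1; by rewrite /induced /= yC aC eya.
Qed.

Lemma comp_conn S C : component e S C -> connected_in e C.
Proof.
move=> hC y z yC zC; apply: (lift_conn hC yC).
move: (hC) => [x0 _ E]; move: yC zC; rewrite E !inE => /andP[_ h1] /andP[_ h2].
by apply: connect_trans h2; rewrite iconn_sym.
Qed.

Lemma comp_card S C r : component e (S :\ r) C -> r \in S -> #|C| < #|S|.
Proof.
move=> hC rS; have sub := comp_sub hC.
apply: proper_card; apply: (sub_proper_trans sub); exact: properD1.
Qed.

Lemma elim_struct n : forall S p r, #|S| <= n -> elim_tree e p S r ->
  (forall x, x \in S -> exists k, up p k x = Some r) /\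
  (forall x y, x \in S -> y \in S -> e x y -> ancestor p x y \/ ancestor p y x).
Proof.
elim: n => [|n IH] S p r hS ht; destruct ht as [S r rS hcomp].
  by move: hS; rewrite leqn0 => /eqP/cards0_eq => E; rewrite E inE in rS.
have reach : forall x, x \in S :\ r -> exists k, up p k x = Some r.
  move=> x xS; have [c cC [pc hc]] := hcomp _ (Cx_comp xS).
  have [h1 _] := IH _ _ _ (leq_trans (comp_card (Cx_comp xS) rS) hS) hc.
  have [k hk] := h1 x (Cx_in xS); exists k.+1; by rewrite upS hk.
split.
  move=> x xS; case: (eqVneq x r) => [->|xr]; first by exists 0.
  by apply: reach; rewrite !inE xr.
have hr : forall y, y \in S -> e r y -> ancestor p r y.
  move=> y yS ery; have yr : y != r by apply: contraTneq ery => ->; rewrite eirr.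
  have yS' : y \in S :\ r by rewrite !inE yr yS.
  have [k hk] := reach y yS'.
  have k0 : 0 < k by case: k hk => // [[E]]; rewrite E eqxx in yr.
  by exists k.
move=> x y xS yS exy.
case: (eqVneq x r) => [E|xr]; first by subst x; left; exact: hr.
case: (eqVneq y r) => [E|yr]; first by subst y; right; apply: hr => //; rewrite esym.
have xS' : x \in S :\ r by rewrite !inE xr xS.
have yS' : y \in S :\ r by rewrite !inE yr yS.
have [c cC [pc hc]] := hcomp _ (Cx_comp xS').
have [_ h2] := IH _ _ _ (leq_trans (comp_card (Cx_comp xS') rS) hS) hc.
apply: h2 => //; first exact: Cx_in.
exact: comp_closed (Cx_comp xS') (Cx_in xS') yS' exy.
Qed.

Lemma elim_ext n : forall S p p' r, #|S| <= n -> elim_tree e p S r ->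
  {in S, p =1 p'} -> elim_tree e p' S r.
Proof.
elim: n => [|n IH] S p p' r hS ht; destruct ht as [S r rS hcomp] => hpp.
  by move: hS; rewrite leqn0 => /eqP/cards0_eq => E; rewrite E inE in rS.
constructor => // C hC.
have [c cC [pc hc]] := hcomp _ hC.
have sub : {subset C <= S}.
  move=> x xC; have := comp_sub hC; move/subsetP/(_ x xC); rewrite inE => /andP[].
  by [].
exists c => //; split; first by rewrite -hpp // sub.
apply: (IH _ p) => //; first exact: leq_trans (comp_card hC rS) hS.
by move=> x xC; apply: hpp; apply: sub.
Qed.

Lemma elim_td p r : p r = None -> elim_tree e p [set: T] r -> td_decomposition e p.
Proof.
move=> pr ht; have [h1 h2] := elim_struct (leqnn _) ht; split.
  move=> x; have [k hk] := h1 x (in_setT x); exists k.+2.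
  by rewrite !upS hk /= pr.
by move=> u v euv; apply: h2; rewrite ?in_setT.
Qed.

Lemma rp_lt (F : T -> option T) z r : rooted_forest F -> ancestor F z r ->
  #|root_path F z| < #|root_path F r|.
Proof.
move=> rf azr; apply: proper_card; apply/properP; split.
  apply/subsetP => u; rewrite !(rp_ance _ _ rf) => h.
  apply: ance_trans h _; by right.
exists r; first by rewrite (rp_ance _ _ rf); left.
apply/negP; rewrite (rp_ance _ _ rf) => -[E|arz].
  by subst; exact: anc_irr rf azr.
exact: anc_irr rf (anc_trans arz azr).
Qed.

Section Norm.
Variable F : T -> option T.
Hypothesis hF : td_decomposition e F.

Lemma top S : (exists x, x \in S) -> connected_in e S ->
  exists2 r, r \in S & forall x, x \in S -> ance F r x.
Proof.
move=> [x0 x0S] hc; have rf := hF.1.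
case: (arg_minnP (fun i => #|root_path F i|) x0S) => r rS rmin.
exists r => // x xS.
have key : forall y z, ance F r y -> induced e S y z -> ance F r z.
  move=> y z hry /and3P[yS zS eyz].
  case: (hF.2 _ _ eyz) => [ayz|azy].
    apply: ance_trans hry _; by right.
  have contra : ancestor F z r -> False.
    move=> azr; have := rp_lt rf azr; have := rmin z zS; lia.
  case: hry => [E|ary].
    by subst y; case: (contra azy).
  case: (anc_comp ary azy) => [->|[arz|azr]]; [by left|by right|by case: contra].
have := hc _ _ rS xS; move/connectP => [q hq ->].
have gen : forall q' y, ance F r y -> path (induced e S) y q' -> ance F r (last y q').
  elim=> [|a q' IH] y hry //= /andP[hya hq']; exact: IH (key _ _ hry hya) hq'.
by apply: gen hq; left.
Qed.

Definition Inv p S r := forall x, x \in S -> exists k, up p k x = Some r /\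
  forall i, i <= k -> exists u, [/\ up p i x = Some u, u \in S & ance F u x].

Lemma norm n : forall S q, #|S| <= n -> (exists x, x \in S) -> connected_in e S ->
  exists p r, [/\ r \in S, p r = q, elim_tree e p S r & Inv p S r].
Proof.
elim: n => [|n IH] S q hS [x0 x0S] hc.
  by move: hS; rewrite leqn0 => /eqP/cards0_eq => E; rewrite E inE in x0S.
have [r rS rtop] := top (ex_intro _ x0 x0S) hc.
have IHC : forall C, exists pc : (T -> option T) * T, component e (S :\ r) C ->
    [/\ pc.2 \in C, pc.1 pc.2 = Some r, elim_tree e pc.1 C pc.2 & Inv pc.1 C pc.2].
  move=> C; case: (classic (component e (S :\ r) C)) => hC; last by exists (F, r).
  have hne : exists x, x \in C.
    by move: (hC) => [x xS ->]; exists x; rewrite inE xS connect0.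
  have [p' [c [h1 h2 h3 h4]]] :=
    IH C (Some r) (leq_trans (comp_card hC rS) hS) hne (comp_conn hC).
  by exists (p', c).
have [g hg] := functional_choice _ IHC.
pose p x := if x \in S :\ r then (g (Cx (S :\ r) x)).1 x else q.
have agree : forall C y, component e (S :\ r) C -> y \in C -> p y = (g C).1 y.
  move=> C y hC yC; have yS : y \in S :\ r by move: (comp_sub hC) => /subsetP; apply.
  by rewrite /p yS -(comp_eq hC yC).
exists p, r; split => //.
- by rewrite /p !inE eqxx.
- constructor => // C hC; have [cC pc ht hI] := hg C hC.
  exists (g C).2 => //; split; first by rewrite (agree C) .
  apply: (elim_ext (leqnn _) ht) => y yC; by rewrite (agree C).
- move=> x xS; case: (eqVneq x r) => [E|xr].
    subst x; exists 0; split => // i; rewrite leqn0 => /eqP ->; exists r; split => //; by left.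
  have xS' : x \in S :\ r by rewrite !inE xr xS.
  have hC := Cx_comp xS'; set C := Cx (S :\ r) x in hC.
  have [cC pc ht hI] := hg C hC.
  have [k [hk hall]] := hI x (Cx_in xS').
  have same : forall i, i <= k -> up p i x = up (g C).1 i x.
    elim=> [|i IHi] // hi; rewrite !upS IHi ?(ltnW hi) //.
    have [u [hu uC _]] := hall i (ltnW hi); rewrite hu /=; exact: agree.
  have subCS : forall y, y \in C -> y \in S.
    move=> y yC; move: (comp_sub hC) => /subsetP /(_ y yC); rewrite inE => /andP[].
    by [].
  exists k.+1; split.
    by rewrite upS same // hk /= (agree C).
  move=> i; rewrite leq_eqVlt => /orP[/eqP ->|hi].
    exists r; split => //; last exact: rtop.
    by rewrite upS same // hk /= (agree C).
  have [u [hu uC hux]] := hall i hi; exists u; split => //.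
    by rewrite same.
  exact: subCS.
Qed.

End Norm.
End Graph.

Lemma ex_min (P : nat -> Prop) : (exists n, P n) -> exists n, P n /\ forall m, P m -> n <= m.
Proof.
move=> [n Pn]; apply: NNPP => hno.
suff : forall k m, m <= k -> ~ P m by move/(_ n n (leqnn n)).
elim=> [|k IH] m hm Pm; apply: hno; exists m; split => // m' Pm';
  rewrite leqNgt; apply/negP => lt.
- lia.
- by apply: (IH m') => //; lia.
Qed.

Section Final.
Variable T : finType.
Variable e : rel T.
Hypothesis esym : symmetric e.
Hypothesis eirr : irreflexive e.
Implicit Types (p : T -> option T) (x y u : T).

Lemma normtop F x0 : td_decomposition e F -> connected_in e [set: T] ->
  exists p r, [/\ p r = None, elim_tree e p [set: T] r &
     forall x, root_path p x \subset root_path F x].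
Proof.
move=> hF hc.
have [p [r [_ pr ht hI]]] := norm esym hF None (leqnn _) (ex_intro _ x0 (in_setT x0)) hc.
exists p, r; split => // x; apply/subsetP => u.
rewrite inE => /existsP [i /eqP hi].
have [k [hk hall]] := hI x (in_setT x).
case: (leqP i k) => hik.
  have [u' [hu' _ hux]] := hall i hik; move: hi; rewrite hu' => -[<-].
  by rewrite (rp_ance _ _ hF.1).
move: hi; rewrite -(subnK (ltnW hik)) upD hk /=.
rewrite -(subnK (_ : 1 <= i - k)); last lia.
by rewrite upD /= pr.
Qed.

Definition Phi (wt : T -> nat) p := \sum_x wt x * #|root_path p x|.

Lemma mono_depth p F : (forall x, root_path p x \subset root_path F x) ->
  forest_depth p <= forest_depth F.
Proof.
move=> h; apply/bigmax_leqP => x _.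
apply: leq_trans (subset_leq_card (h x)) (leq_bigmax x).
Qed.

Lemma mono_Phi wt p F : (forall x, root_path p x \subset root_path F x) ->
  Phi wt p <= Phi wt F.
Proof.
move=> h; apply: leq_sum => x _; apply: leq_mul => //; exact: subset_leq_card.
Qed.

Section Chain.
Variable x0 : T.
Let s := enum T.
Let ix x := index x s.
Definition chainF x := if ix x is i.+1 then Some (nth x0 s i) else None.

Lemma ix_lt x : ix x < size s.
Proof. by rewrite /ix index_mem mem_enum. Qed.

Lemma ix_nth i : i < size s -> ix (nth x0 s i) = i.
Proof. by move=> hi; rewrite /ix index_uniq // enum_uniq. Qed.

Lemma up_chain k x : k <= ix x -> up chainF k x = Some (nth x0 s (ix x - k)).
Proof.
elim: k => [|k IH] hk; first by rewrite subn0 /ix nth_index // mem_enum.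
rewrite upS IH ?(ltnW hk) //= /chainF ix_nth; last by have := ix_lt x; lia.
have -> : ix x - k = (ix x - k.+1).+1 by lia.
by [].
Qed.

Lemma chain_td : td_decomposition e chainF.
Proof.
split.
  move=> x; exists (ix x).+1; rewrite upS up_chain // subnn /= /chainF.
  rewrite ix_nth //; have := ix_lt x; lia.
have key : forall a b, ix a < ix b -> ancestor chainF a b.
  move=> a b hab; exists (ix b - ix a); first lia.
  rewrite up_chain; last lia.
  have -> : ix b - (ix b - ix a) = ix a by lia.
  by rewrite /ix nth_index // mem_enum.
move=> a b eab; case: (ltngtP (ix a) (ix b)) => h.
- by left; apply: key.
- by right; apply: key.
- have : a = b.
    by rewrite -(nth_index x0 (mem_enum T a)) -(nth_index x0 (mem_enum T b)) -/s; rewrite /ix in h; rewrite h.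
  by move=> E; rewrite E eirr in eab.
Qed.
End Chain.


Section Swap.
Variables (F : T -> option T) (v w : T).
Local Notation sg := (tperm v w).
Definition swapF x := omap sg (F (sg x)).

Lemma up_swap k x : up swapF k x = omap sg (up F k (sg x)).
Proof.
elim: k => [|k IH]; first by rewrite /= tpermK.
rewrite !upS IH; case: (up F k (sg x)) => //= a.
by rewrite /swapF tpermK.
Qed.

Lemma omap_eq o u : (omap sg o == Some u) = (o == Some (sg u)).
Proof.
case: o => [a|] //=; rewrite !(inj_eq (@Some_inj _)).
exact: (can2_eq (tpermK v w) (tpermK v w)).
Qed.

Lemma anc_swap a b : ancestor swapF a b <-> ancestor F (sg a) (sg b).
Proof.
split=> -[k k0 hk]; exists k => //; apply/eqP.
- by rewrite -omap_eq -up_swap hk.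
- by rewrite up_swap omap_eq hk.
Qed.

Lemma rp_swap x : #|root_path swapF x| = #|root_path F (sg x)|.
Proof.
have -> : root_path swapF x = sg @^-1: root_path F (sg x).
  apply/setP => u; rewrite !inE; apply/existsP/existsP => -[k hk]; exists k.
  - by rewrite -omap_eq -up_swap.
  - by rewrite up_swap omap_eq.
exact/card_preimset/perm_inj.
Qed.

Hypothesis hF : td_decomposition e F.
Hypothesis awv : ancestor F w v.
Hypothesis dom : forall x, x != v -> e w x -> e v x.
Hypothesis vw : v != w.

Definition cmp (F0 : T -> option T) a b := ancestor F0 a b \/ ancestor F0 b a.

Lemma swap_td : td_decomposition e swapF.
Proof.
have rf := hF.1.
split.
  move=> x; have [k hk] := rf (sg x); exists k; by rewrite up_swap hk.
have E : forall a b, cmp F (sg a) (sg b) -> cmp swapF a b.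
  by move=> a b [h|h]; [left|right]; apply/anc_swap.
have H1 : forall b, e v b -> cmp F (sg v) (sg b).
  move=> b evb; rewrite tpermL; case: tpermP => [E1|E2|bv bw].
  - by subst b; rewrite eirr in evb.
  - by left.
  - case: (hF.2 _ _ evb) => [avb|abv]; first by left; exact: anc_trans awv avb.
    case: (anc_comp awv abv) => [E3|[h|h]]; [by case: bw| by left | by right].
have H2 : forall b, e w b -> cmp F (sg w) (sg b).
  move=> b ewb; rewrite tpermR; case: tpermP => [E1|E2|bv bw].
  - by right.
  - by subst b; rewrite eirr in ewb.
  - by apply: hF.2; apply: dom => //; apply/eqP.
have flip : forall F0 a b, cmp F0 a b -> cmp F0 b a by move=> ? ? ? [h|h]; [right|left].
move=> a b eab; apply: E.
case: (eqVneq a v) => [Ea|av]; first by subst a; apply: H1.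
case: (eqVneq a w) => [Ea|aw]; first by subst a; apply: H2.
case: (eqVneq b v) => [Eb|bv].
  by subst b; apply: flip; apply: H1; rewrite esym.
case: (eqVneq b w) => [Eb|bw].
  by subst b; apply: flip; apply: H2; rewrite esym.
rewrite !tpermD 1?eq_sym //; first exact: hF.2.
all: by rewrite eq_sym.
Qed.

Lemma swap_depth : forest_depth swapF = forest_depth F.
Proof.
rewrite /forest_depth (reindex_inj (@perm_inj _ sg)) /=.
by apply: eq_bigr => x _; rewrite rp_swap tpermK.
Qed.

Lemma swap_Phi wt : wt w < wt v -> Phi wt swapF < Phi wt F.
Proof.
move=> wwv; rewrite /Phi (reindex_inj (@perm_inj _ sg)) /=.
have dwv := rp_lt hF.1 awv.
have sgv : sg v = w by rewrite tpermL.
have sgw : sg w = v by rewrite tpermR.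
rewrite (bigD1 v) //= (bigD1 w) /=; last by rewrite eq_sym.
rewrite [in X in _ < X](bigD1 v) //= [in X in _ < X](bigD1 w) /=; last by rewrite eq_sym.
rewrite !rp_swap !tpermK sgv sgw.
set R1 := \sum_(i | _) _; set R2 := \sum_(i | _) _.
have -> : R1 = R2.
  apply: eq_bigr => i /andP[iv iw]; rewrite rp_swap tpermK tpermD //; by rewrite eq_sym.
nia.
Qed.

End Swap.

Section Weight.
Variable lab : T -> int.
Definition wt x := #|nbhd e x| * #|T|.+1 + #|[set y | (lab y < lab x)%R]|.

Lemma dom_props v w : dominates e lab v w ->
  [/\ v != w, (forall x, x != v -> e w x -> e v x) & wt w < wt v].
Proof.
move=> /andP[vw H].
have cw := cardsD1 v (nbhd e w); have cv := cardsD1 w (nbhd e v).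
rewrite !inE esym in cw cv.
have rk : forall x, #|[set y | (lab y < lab x)%R]| < #|T|.+1 by move=> x; rewrite ltnS max_card.
have rkv := rk v; have rkw := rk w.
case/orP: H => [hp | /andP[/eqP heq hl]].
  have sub := proper_sub hp; have lt := proper_card hp.
  split => // [x xv ewx|].
    have : x \in nbhd e w :\ v by rewrite !inE xv ewx.
    by move/(subsetP sub); rewrite !inE => /andP[].
  have h1 : #|nbhd e w|.+1 <= #|nbhd e v| by move: cw cv; case: (e w v) => /= cw cv; lia.
  have := leq_mul h1 (leqnn #|T|.+1); rewrite /wt mulSn; lia.
split => // [x xv ewx|].
  have : x \in nbhd e w :\ v by rewrite !inE xv ewx.
  by rewrite -heq !inE => /andP[].
have lt : #|[set y | (lab y < lab w)%R]| < #|[set y | (lab y < lab v)%R]|.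
  apply: proper_card; apply/properP; split.
    by apply/subsetP => y; rewrite !inE => h; apply: lt_trans h hl.
  by exists w; rewrite !inE ?hl ?ltxx.
have h1 : #|nbhd e w| = #|nbhd e v| by rewrite cw cv heq.
rewrite /wt h1; lia.
Qed.
End Weight.

End Final.

Local Open Scope fset_scope.

Theorem mainTheorem1 (V : {fset int}) (e : rel V) :
  symmetric e -> irreflexive e ->
  V != fset0 ->
  connected_in e [set: V] ->
  exists (par : V -> option V) (r : V),
    [/\ par r = None,
        elim_tree e par [set: V] r,
        is_treedepth e (forest_depth par) &
        forall w v : V, dominates e (fun x : V => fsval x) v w ->
          ~ ancestor par w v].
Proof.
move=> esym eirr hne hc.
have [a aV] := fset0Pn _ hne.
pose x0 : V := [` aV].
pose lab := fun x : V => fsval x.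
pose P n := exists p r, [/\ p r = None, elim_tree e p [set: V] r & forest_depth p = n].
have [p0 [r0 [h1 h2 _]]] := normtop esym x0 (chain_td eirr x0) hc.
have : exists n, P n by exists (forest_depth p0), p0, r0.
move/ex_min => [D [PD Dmin]].
pose Q m := exists p r, [/\ p r = None, elim_tree e p [set: V] r, forest_depth p = D
   & Phi (wt e lab) p = m].
have : exists m, Q m.
  by case: PD => p [r [pr ht hd]]; exists (Phi (wt e lab) p), p, r.
move/ex_min => [M [[par [r [pr ht hd hM]]] Mmin]].
have htd := elim_td esym eirr pr ht.
exists par, r; split => //.
- rewrite hd; split; first by exists par.
  move=> F hF; have [p [r' [pr' ht' hsub]]] := normtop esym x0 hF hc.
  apply: leq_trans (mono_depth hsub).
  by apply: Dmin; exists p, r'.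
- move=> w v hdom anc.
  have [vw hdomN wlt] := dom_props esym hdom.
  have hF' := swap_td esym eirr htd anc hdomN.
  have [p [r' [pr' ht' hsub]]] := normtop esym x0 hF' hc.
  have d1 := mono_depth hsub; rewrite swap_depth hd in d1.
  have d2 : D <= forest_depth p by apply: Dmin; exists p, r'.
  have f1 := mono_Phi (wt e lab) hsub.
  have f2 := @swap_Phi _ _ _ _ _ htd anc vw (wt e lab) wlt.
  have : M <= Phi (wt e lab) p.
    apply: Mmin; exists p, r'; split => //; lia.
  lia.
Qed.
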